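(* Let $\beta=(1+\sqrt{13})/2$, the positive root of $x^2-x-3$, and define $F:[0,1+\beta)\to[0,1+\beta)$ by $F(x)=\beta x-y_j$ for $x\in I_j$, where $I_1=[0,1)$, $I_2=[1,1+1/\beta)$, $I_3=[1+1/\beta,1+2/\beta)$, $I_4=[1+2/\beta,\beta)$, $I_5=[\beta,1+\beta)$ and $y_1=0$, $y_2=0$, $y_3=1$, $y_4=2$, $y_5=3+\beta$. Then the orbit $\{F^n(\beta-1):n\ge0\}$ of $\beta-1$ under $F$ is infinite.
   Context: This $F$ is the generalized $\beta$-transformation associated with the one-dimensional substitution $l\to lsss$, $s\to l$ with tile lengths $|l|=\beta$, $|s|=1$; note $1+3/\beta=\beta$. *)

(* Defs.v *)
From Stdlib Require Import Reals List.
Open Scope R_scope.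

Definition beta : R := (1 + sqrt 13) / 2.

(* The generalized beta-transformation F on [0, 1+beta).
   Outside the domain [0,1+beta) F is set to the identity (irrelevant:
   the orbit of beta-1 stays in the domain). *)
Definition F (x : R) : R :=
  if Rlt_dec x 0 then x
  else if Rlt_dec x 1 then beta * x - 0
  else if Rlt_dec x (1 + 1 / beta) then beta * x - 0
  else if Rlt_dec x (1 + 2 / beta) then beta * x - 1
  else if Rlt_dec x beta then beta * x - 2
  else if Rlt_dec x (1 + beta) then beta * x - (3 + beta)
  else x.

Definition finite_set (S : R -> Prop) : Prop :=
  exists l : list R, forall x, S x -> In x l.

Definition orbit (f : R -> R) (x : R) : R -> Prop :=
  fun y => exists n : nat, y = Nat.iter n f x.

(* Main.v *)
Require Import Defs.
From Stdlib Require Import Reals List.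
From Stdlib Require Import Lra Lia Psatz ZArith FinFun.
Open Scope R_scope.

Lemma beta_sq : beta * beta = beta + 3.
Proof.
  unfold beta. assert (H := sqrt_sqrt 13 ltac:(lra)). nra.
Qed.

Lemma beta_bnd : 2.3 < beta < 2.31.
Proof.
  unfold beta. assert (H := sqrt_sqrt 13 ltac:(lra)).
  assert (H0 := sqrt_pos 13). split; nra.
Qed.

Lemma inv1 : 1 / beta = (beta - 1) / 3.
Proof. assert (H := beta_sq). assert (H1 := beta_bnd).
  apply (Rmult_eq_reg_l beta); [|lra]. field_simplify; lra. Qed.

Lemma inv2 : 2 / beta = 2 * (beta - 1) / 3.
Proof. assert (H := beta_sq). assert (H1 := beta_bnd).
  apply (Rmult_eq_reg_l beta); [|lra]. field_simplify; lra. Qed.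

Definition yv (x : R) : Z * Z :=
  if Rlt_dec x 0 then (0,0)%Z
  else if Rlt_dec x 1 then (0,0)%Z
  else if Rlt_dec x (1 + 1 / beta) then (0,0)%Z
  else if Rlt_dec x (1 + 2 / beta) then (1,0)%Z
  else if Rlt_dec x beta then (2,0)%Z
  else if Rlt_dec x (1 + beta) then (3,1)%Z
  else (0,0)%Z.

Lemma F_spec x : 0 <= x < 1 + beta ->
  F x = beta * x - (IZR (fst (yv x)) + IZR (snd (yv x)) * beta) /\
  0 <= F x < 1 + beta /\
  (yv x = (0,0)%Z \/ yv x = (1,0)%Z \/ yv x = (2,0)%Z \/ yv x = (3,1)%Z).
Proof.
  intros Hx. assert (H := beta_sq). assert (H1 := beta_bnd).
  unfold F, yv. rewrite inv1, inv2.
  repeat destruct Rlt_dec; simpl; try lra; (split; [lra| split; [nra| tauto]]).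
Qed.

Fixpoint st (n : nat) : Z * Z :=
  match n with
  | O => ((-11)%Z, 6%Z)
  | S n => let p := st n in
           let y := yv (IZR (fst p) + IZR (snd p) * beta) in
           ((3 * snd p - fst y)%Z, (fst p + snd p - snd y)%Z)
  end.

Definition xs n := IZR (fst (st n)) + IZR (snd (st n)) * beta.
Definition cj n := IZR (fst (st n)) + IZR (snd (st n)) * (1 - beta).

Lemma st_S n : st (S n) = ((3 * snd (st n) - fst (yv (xs n)))%Z,
   (fst (st n) + snd (st n) - snd (yv (xs n)))%Z).
Proof. reflexivity. Qed.

Lemma xs_dom n : 0 <= xs n < 1 + beta /\ xs n = Nat.iter n F (6 * beta - 11).
Proof.
  induction n as [|n [IH1 IH2]].
  - unfold xs; simpl. assert (H1 := beta_bnd). split; lra.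
  - destruct (F_spec _ IH1) as [E [D _]].
    assert (xs (S n) = F (xs n)).
    { rewrite E. unfold xs at 1. rewrite st_S. cbn [fst snd].
      rewrite !minus_IZR, !plus_IZR, !mult_IZR.
      assert (H := beta_sq). unfold xs.
      set (a := IZR (fst (st n))). set (b := IZR (snd (st n))).
      set (ya := IZR (fst _)). set (yb := IZR (snd (yv _))).
      assert (b * (beta * beta) = b * (beta + 3)) by (rewrite H; ring).
      simpl IZR. nra. }
    rewrite H. split; [lra|]. simpl. rewrite IH2. reflexivity.
Qed.

Lemma cj_step n : Rabs (cj n) >= 7 -> Rabs (cj (S n)) >= Rabs (cj n) + 1/10.
Proof.
  intros Hc.
  destruct (F_spec _ (proj1 (xs_dom n))) as [_ [_ Y]].
  assert (H := beta_sq). assert (H1 := beta_bnd).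
  unfold cj in *. rewrite st_S. cbn [fst snd].
  rewrite !minus_IZR, !plus_IZR, !mult_IZR.
  set (a := IZR (fst (st n))) in *. set (b := IZR (snd (st n))) in *.
  assert (b * (beta * beta) = b * (beta + 3)) by (rewrite H; ring).
  simpl IZR.
  destruct Y as [Y|[Y|[Y|Y]]]; rewrite Y; simpl;
  unfold Rabs in *; repeat destruct Rcase_abs; nra.
Qed.

Lemma cj_ge n : Rabs (cj n) >= 7.
Proof.
  induction n.
  - unfold cj; simpl. assert (H1 := beta_bnd). unfold Rabs; destruct Rcase_abs; lra.
  - assert (H := cj_step n IHn). lra.
Qed.

Lemma cj_lt n k : Rabs (cj n) < Rabs (cj (n + S k)).
Proof.
  induction k.
  - rewrite Nat.add_1_r. assert (H := cj_step n (cj_ge n)). lra.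
  - replace (n + S (S k))%nat with (S (n + S k)) by lia.
    assert (H := cj_step _ (cj_ge (n + S k))). lra.
Qed.

Lemma no_rat : forall n (p q : Z), (Z.abs_nat q < n)%nat -> q <> 0%Z ->
  (p*p - p*q - 3*q*q <> 0)%Z.
Proof.
  induction n; intros p q Hn Hq E; [lia|].
  destruct (Z.Even_or_Odd p) as [[p' Hp]|[p' Hp]];
  destruct (Z.Even_or_Odd q) as [[q' Hq']|[q' Hq']]; subst; try lia.
  apply (IHn p' q'); lia.
Qed.

Lemma uniq_repr a b a' b' :
  IZR a + IZR b * beta = IZR a' + IZR b' * beta -> a = a' /\ b = b'.
Proof.
  intros E. destruct (Z.eq_dec b b') as [->|Hb].
  - split; [apply eq_IZR; lra | reflexivity].
  - exfalso. set (q := (b - b')%Z). set (p := (a' - a)%Z).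
    assert (Eq : IZR q * beta = IZR p) by (unfold p, q; rewrite !minus_IZR; lra).
    assert (IZR (p*p - p*q - 3*q*q) = 0).
    { rewrite !minus_IZR, !mult_IZR. rewrite <- Eq.
      assert (H := beta_sq).
      replace (IZR q * beta * (IZR q * beta) - IZR q * beta * IZR q - IZR 3 * IZR q * IZR q)
        with (IZR q * IZR q * (beta * beta - beta - 3)) by (simpl; ring).
      rewrite H. ring. }
    apply eq_IZR in H.
    apply (no_rat (S (Z.abs_nat q)) p q); [lia | unfold q; lia | exact H].
Qed.

Lemma xs_inj : Injective xs.
Proof.
  intros n m E.
  destruct (uniq_repr _ _ _ _ E) as [E1 E2].
  assert (cj n = cj m) by (unfold cj; rewrite E1, E2; reflexivity).
  destruct (Nat.lt_trichotomy n m) as [L|[L|L]]; auto; exfalso.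
  - replace m with (n + S (m - n - 1))%nat in H by lia.
    assert (Hh := cj_lt n (m - n - 1)). rewrite H in Hh. lra.
  - replace n with (m + S (n - m - 1))%nat in H by lia.
    assert (Hh := cj_lt m (n - m - 1)). rewrite H in Hh. lra.
Qed.

Lemma first6 : Nat.iter 6 F (beta - 1) = 6 * beta - 11.
Proof.
  assert (H := beta_sq). assert (H1 := beta_bnd).
  assert (G : forall x, 0 <= x < 1 + beta -> F x = beta * x - (IZR (fst (yv x)) + IZR (snd (yv x)) * beta))
    by (intros; apply F_spec; auto).
  assert (E1 : F (beta - 1) = 3).
  { rewrite G by lra. unfold yv. rewrite inv1, inv2. repeat destruct Rlt_dec; simpl; lra. }
  assert (E2 : F 3 = 2 * beta - 3).
  { rewrite G by lra. unfold yv. rewrite inv1, inv2. repeat destruct Rlt_dec; simpl; lra. }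
  assert (E3 : F (2 * beta - 3) = 5 - beta).
  { rewrite G by lra. unfold yv. rewrite inv1, inv2. repeat destruct Rlt_dec; simpl; lra. }
  assert (E4 : F (5 - beta) = 3 * beta - 6).
  { rewrite G by lra. unfold yv. rewrite inv1, inv2. repeat destruct Rlt_dec; simpl; lra. }
  assert (E5 : F (3 * beta - 6) = 9 - 3 * beta).
  { rewrite G by lra. unfold yv. rewrite inv1, inv2. repeat destruct Rlt_dec; simpl; lra. }
  assert (E6 : F (9 - 3 * beta) = 6 * beta - 11).
  { rewrite G by lra. unfold yv. rewrite inv1, inv2. repeat destruct Rlt_dec; simpl; lra. }
  simpl. rewrite E1, E2, E3, E4, E5, E6. reflexivity.
Qed.

Theorem mainTheorem6 : ~ finite_set (orbit F (beta - 1)).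
Proof.
  intros [l Hl].
  assert (Hin : forall k, In (xs k) l).
  { intros k. apply Hl. exists (k + 6)%nat.
    rewrite Nat.iter_add, first6. apply (proj2 (xs_dom k)). }
  assert (ND : NoDup (map xs (seq 0 (S (length l))))).
  { apply Injective_map_NoDup; [apply xs_inj | apply seq_NoDup]. }
  assert (I : incl (map xs (seq 0 (S (length l)))) l).
  { intros y Hy. apply in_map_iff in Hy. destruct Hy as [k [<- _]]. apply Hin. }
  assert (L := NoDup_incl_length ND I).
  rewrite length_map, length_seq in L. lia.
Qed.
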